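(* Suppose that $E_Q[\xi\mid\mathcal G]\in L_{\mathcal F}$ for every $Q\in L_{\mathcal F}^*\cap\mathcal P_{\mathcal G}$ and every $\xi\in L_{\mathcal F}$. Let $Q\in L_{\mathcal F}^*\cap\mathcal P_{\mathcal G}$ and let $\pi:L_{\mathcal F}\to L_{\mathcal G}$ satisfy (MON) and (REG). Then for every $X\in L_{\mathcal F}$ \[ K(X,Q)=\inf_{\xi\in L_{\mathcal F}}\big\{\pi(\xi)\ \big|\ E_Q[\xi\mid\mathcal G]=E_Q[X\mid\mathcal G]\big\}, \] where $K(X,Q):=\inf_{\xi\in L_{\mathcal F}}\{\pi(\xi)\mid E_Q[\xi\mid\mathcal G]\ge E_Q[X\mid\mathcal G]\}$.
   Context: Let $(\Omega,\mathcal F,\mathbb P)$ be a probability space and $\mathcal G\subseteq\mathcal F$ a sub-$\sigma$-algebra. (In)equalities between random variables hold $\mathbb P$-a.s.; $\inf$ denotes the $\mathbb P$-essential infimum. Standing assumptions: $L_{\mathcal F}\subseteq L^0(\Omega,\mathcal F,\mathbb P)$, $L_{\mathcal G}\subseteq L^0(\Omega,\mathcal G,\mathbb P)$ are vector lattices closed under multiplication by indicators of $\mathcal F$- (resp. $\mathcal G$-) measurable sets; the order continuous dual $L^*_{\mathcal F}$ of $(L_{\mathcal F},\ge)$ is a lattice contained in $L^1(\Omega,\mathcal F,\mathbb P)$ (functionals $X\mapsto E_{\mathbb P}[ZX]$), closed under multiplication by indicators of sets in $\mathcal F$; $(L_{\mathcal F},\sigma(L_{\mathcal F},L^*_{\mathcal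 F}))$ is a locally convex Riesz space. $\mathcal P_{\mathcal G}$ is the set of probabilities $Q\ll\mathbb P$ with $Q=\mathbb P$ on $\mathcal G$ (identified with densities $dQ/d\mathbb P$); for such $Q$, comparisons of $\mathcal G$-measurable variables hold equivalently $Q$-a.s. or $\mathbb P$-a.s. (MON): $X\le Y\Rightarrow \pi(X)\le\pi(Y)$. (REG): $\pi(X\mathbf 1_A+Y\mathbf 1_{A^c})=\pi(X)\mathbf 1_A+\pi(Y)\mathbf 1_{A^c}$ for $X,Y\in L_{\mathcal F}$, $A\in\mathcal G$. *)

(* Defs.v *)
From HB Require Import structures.
From mathcomp Require Import all_boot all_order all_algebra.
From mathcomp Require Import all_classical all_reals all_analysis.
From mathcomp Require Import measurable_realfun.
Set Implicit Arguments. Unset Strict Implicit. Unset Printing Implicit Defensive.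
Import Order.TTheory GRing.Theory Num.Theory.
Local Open Scope classical_set_scope.
Local Open Scope ring_scope.

Section Defs.
Context {R : realType} {d : measure_display} {T : measurableType d}.
Variable P : probability T R.

Definition Gmeas (G : set (set T)) (f : T -> R) :=
  forall B : set R, measurable B -> G (f @^-1` B).

Definition sub_sigma (G : set (set T)) :=
  sigma_algebra setT G /\ G `<=` measurable.

(** Elements of L^0 are identified up to P-a.s. equality; a set of
    representatives [L] is "closed under a.s. modification". *)
Definition ae_closed (meas : (T -> R) -> Prop) (L : set (T -> R)) :=
  forall X Y, L X -> meas Y -> {ae P, forall w, X w = Y w} -> L Y.

Definition vlattice (S : set (set T)) (meas : (T -> R) -> Prop)
  (L : set (T -> R)) :=
  [/\ L (fun _ => 0),
      (forall X Y, L X -> L Y -> L (fun w => X w + Y w)),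
      (forall (c : R) X, L X -> L (fun w => c * X w)),
      (forall X Y, L X -> L Y -> L (fun w => Num.max (X w) (Y w))) &
      [/\ (forall X A, L X -> S A -> L (fun w => X w * \1_A w)),
      (forall X, L X -> meas X) & ae_closed meas L]].

Definition Fmeas (f : T -> R) := measurable_fun setT f.

Definition EP (f : T -> R) : \bar R := \int[P]_w (f w)%:E.

(** The order continuous dual of (L_F, >=), represented (standing assumption)
    by densities Z in L^1 acting via X |-> E_P[Z X]: a functional is order
    continuous iff for every downward directed family D in L_F with infimum 0
    in L_F, inf_{X in D} |E[Z X]| = 0. *)
Definition ocdual (LF : set (T -> R)) : set (T -> R) :=
  [set Z | [/\ Fmeas Z, P.-integrable setT (EFin \o Z),
    (forall X, LF X -> P.-integrable setT (fun w => (Z w * X w)%:E)) &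
    (forall D : set (T -> R), D `<=` LF -> D !=set0 ->
       (forall X Y, D X -> D Y -> exists2 W, D W &
          {ae P, forall w, W w <= X w} /\ {ae P, forall w, W w <= Y w}) ->
       (forall X, D X -> {ae P, forall w, 0 <= X w}) ->
       (forall V, LF V -> (forall X, D X -> {ae P, forall w, V w <= X w}) ->
          {ae P, forall w, V w <= 0}) ->
       forall eps : R, 0 < eps -> exists2 X, D X &
          (`| fine (EP (fun w => Z w * X w)) | < eps))]].

(** Densities dQ/dP of probabilities Q << P with Q = P on G. *)
Definition PG (G : set (set T)) : set (T -> R) :=
  [set Z | [/\ Fmeas Z, {ae P, forall w, 0 <= Z w},
     P.-integrable setT (EFin \o Z), (\int[P]_w (Z w)%:E = 1)%E &
     forall A, G A -> (\int[P]_(w in A) (Z w)%:E = P A)%E]].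

(** [Y] is a version of E_Q[xi | G], where Z = dQ/dP. *)
Definition is_condexp (G : set (set T)) (Z xi Y : T -> R) :=
  [/\ Gmeas G Y,
      P.-integrable setT (fun w => (Z w * xi w)%:E),
      P.-integrable setT (fun w => (Z w * Y w)%:E) &
      forall A, G A -> (\int[P]_(w in A) (Z w * Y w)%:E =
                       \int[P]_(w in A) (Z w * xi w)%:E)%E].

Definition is_essinf (S : set (T -> R)) (Y : T -> \bar R) :=
  [/\ measurable_fun setT Y,
      (forall f, S f -> {ae P, forall w, (Y w <= (f w)%:E)%E}) &
      (forall Y' : T -> \bar R, measurable_fun setT Y' ->
         (forall f, S f -> {ae P, forall w, (Y' w <= (f w)%:E)%E}) ->
         {ae P, forall w, (Y' w <= Y w)%E})].

Definition essinf (S : set (T -> R)) : T -> \bar R :=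
  xget (fun _ => +oo%E) [set Y | is_essinf S Y].

Definition MON (LF : set (T -> R)) (pi : (T -> R) -> (T -> R)) :=
  forall X Y, LF X -> LF Y -> {ae P, forall w, X w <= Y w} ->
    {ae P, forall w, pi X w <= pi Y w}.

Definition REG (G : set (set T)) (LF : set (T -> R))
    (pi : (T -> R) -> (T -> R)) :=
  forall X Y A, LF X -> LF Y -> G A ->
    {ae P, forall w, pi (fun v => X v * \1_A v + Y v * \1_(~` A) v) w =
                     pi X w * \1_A w + pi Y w * \1_(~` A) w}.

Definition K (G : set (set T)) (LF : set (T -> R))
    (pi : (T -> R) -> (T -> R)) (X Z : T -> R) : T -> \bar R :=
  essinf [set pi xi | xi in [set xi | LF xi /\ exists YX Yxi,
     [/\ is_condexp G Z X YX, is_condexp G Z xi Yxi &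
         {ae P, forall w, YX w <= Yxi w}]]].

Definition Keq (G : set (set T)) (LF : set (T -> R))
    (pi : (T -> R) -> (T -> R)) (X Z : T -> R) : T -> \bar R :=
  essinf [set pi xi | xi in [set xi | LF xi /\ exists YX Yxi,
     [/\ is_condexp G Z X YX, is_condexp G Z xi Yxi &
         {ae P, forall w, YX w = Yxi w}]]].

End Defs.

(* Main.v *)
Require Import Defs.
From HB Require Import structures.
From mathcomp Require Import all_boot all_order all_algebra.
From mathcomp Require Import all_classical all_reals all_analysis.
From mathcomp Require Import measurable_realfun.
Import Order.TTheory GRing.Theory Num.Theory.
Local Open Scope classical_set_scope.
Local Open Scope ring_scope.
From mathcomp Require Import lra.
From mathcomp Require Import ring.
Lemma essinf_ext (R : realType) (d : measure_display) (T : measurableType d)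
  (P : probability T R) (S1 S2 : set (T -> R)) :
  (forall Y' : T -> \bar R, (forall f, S1 f -> {ae P, forall w, (Y' w <= (f w)%:E)%E}) <->
     (forall f, S2 f -> {ae P, forall w, (Y' w <= (f w)%:E)%E})) ->
  essinf P S1 = essinf P S2.
Proof.
move=> H; rewrite /essinf; congr (xget _ _).
apply/funext => Y; apply/propext; rewrite /is_essinf; split.
- case=> m lb gr; split => //; first exact/H.
  by move=> Y' mY' lb'; apply: gr => //; apply/H.
- case=> m lb gr; split => //; first exact/H.
  by move=> Y' mY' lb'; apply: gr => //; apply/H.
Qed.

Lemma condexp_uniq (R : realType) (d : measure_display) (T : measurableType d)
  (P : probability T R) (G : set (set T)) (Z xi Y1 Y2 : T -> R) :
  sub_sigma G -> PG P G Z -> is_condexp P G Z xi Y1 -> is_condexp P G Z xi Y2 ->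
  {ae P, forall w, Y1 w <= Y2 w}.
Proof.
move=> [HGs HGm] [Zm Z0 iZ _ ZA] [G1 i1 iY1 e1] [G2 _ iY2 e2].
pose A := ~` [set w | Y1 w <= Y2 w].
have mT' (Y : T -> R) : Gmeas G Y -> measurable_fun (setT : set (g_sigma_algebraType G)) Y.
  move=> GY _ B mB; rewrite setTI; apply: sub_sigma_algebra; exact: GY.
have GA : G A.
  have := measurable_fun_le (measurableT : measurable (setT : set (g_sigma_algebraType G)))
    (mT' _ G1) (mT' _ G2).
  move/measurableC; rewrite setTI.
  by rewrite [X in X _ -> _]sigma_algebra_id.
have mA : measurable A := HGm A GA.
have mTT (Y : T -> R) : Gmeas G Y -> measurable_fun setT Y.
  move=> GY _ B mB; rewrite setTI; apply: HGm; exact: GY.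
have iS f : P.-integrable setT f -> P.-integrable A f.
  by move=> h; apply: integrableS h => //.
pose h := fun w => (Z w * (Y1 w - Y2 w))%:E.
have mh : measurable_fun A h.
  apply/measurable_EFinP; apply: measurable_funM.
    exact: measurable_funS Zm.
  apply: measurable_funB; apply: measurable_funS (mTT _ _) => //.
have ih0 : (\int[P]_(w in A) h w = 0)%E.
  rewrite /h (eq_integral (fun w => (Z w * Y1 w)%:E - (Z w * Y2 w)%:E))%E; last first.
    by move=> w _; rewrite -EFinB mulrBr.
  rewrite (integralB_EFin mA (iS _ iY1) (iS _ iY2)) (e1 A GA) (e2 A GA).
  by rewrite subee//; apply: integrable_fin_num => //; apply: iS.
have iah : (\int[P]_(w in A) `|h w| = 0)%E.
  rewrite -ih0; apply: ae_eq_integral => //.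
    by apply: measurableT_comp.
  move: Z0; apply: filterS => w Zw Aw.
  have lt : Y2 w < Y1 w by rewrite ltNge; apply/negP.
  by rewrite gee0_abs// /h lee_fin mulr_ge0// subr_ge0 ltW.
have := (ae_eq_integral_abs P mA mh).1 iah => hae.
have iZA : (\int[P]_(w in A) (Z w)%:E = 0)%E.
  rewrite -(integral0 P A); apply: ae_eq_integral => //.
    by apply/measurable_EFinP; exact: measurable_funS Zm.
  move: hae; apply: filterS => w hw Aw.
  have lt : Y2 w < Y1 w by rewrite ltNge; apply/negP.
  move: (hw Aw); rewrite /h /= => /eqP; rewrite eqe mulf_eq0 => /orP[/eqP -> //|].
  by rewrite subr_eq0 => /eqP E; rewrite E ltxx in lt.
have PA0 : P A = 0%E by rewrite -ZA.
have nA : P.-negligible A by apply/negligibleP.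
exact: nA.
Qed.
Arguments condexp_uniq {R d T P G Z xi Y1 Y2}.

Lemma condexp_shift (R : realType) (d : measure_display) (T : measurableType d)
  (P : probability T R) (G : set (set T)) (Z xi Yx YX : T -> R) :
  sub_sigma G -> is_condexp P G Z xi Yx -> Gmeas G YX ->
  P.-integrable setT (fun w => (Z w * YX w)%:E) ->
  P.-integrable setT (fun w => (Z w * (xi w + ((-1) * Yx w + YX w)))%:E) ->
  is_condexp P G Z (fun w => xi w + ((-1) * Yx w + YX w)) YX.
Proof.
move=> [_ HGm] [Gx ixi iYx eqx] GYX iYX ixi'; split => // A GA.
have mA := HGm A GA.
have iS f : P.-integrable setT f -> P.-integrable A f.
  by move=> h; apply: integrableS h => //.
rewrite [RHS](eq_integral (fun w => (Z w * xi w)%:E + ((Z w * YX w)%:E - (Z w * Yx w)%:E)))%E; last first.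
  by move=> w _; rewrite -EFinB -EFinD; congr (_%:E); ring.
rewrite (integralD mA (iS _ ixi)); last first.
  by apply: integrableB => //; apply: iS.
rewrite (integralB_EFin mA (iS _ iYX) (iS _ iYx)) (eqx A GA).
by rewrite addeC subeK//; apply: integrable_fin_num => //; apply: iS.
Qed.
Arguments condexp_shift {R d T P G Z xi Yx YX}.

Theorem lemma14 (R : realType) (d : measure_display) (T : measurableType d)
  (P : probability T R) (G : set (set T))
  (LF LG : set (T -> R)) (pi : (T -> R) -> (T -> R)) (Z : T -> R)
  (HG : sub_sigma G)
  (HLF : vlattice P measurable Fmeas LF)
  (HLG : vlattice P G (Gmeas G) LG)
  (Hdual_lat : forall Z1 Z2, ocdual P LF Z1 -> ocdual P LF Z2 ->
      ocdual P LF (fun w => Num.max (Z1 w) (Z2 w)))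
  (Hdual_vs : forall (c : R) Z1 Z2, ocdual P LF Z1 -> ocdual P LF Z2 ->
      ocdual P LF (fun w => c * Z1 w + Z2 w))
  (Hdual_ind : forall Z1 A, ocdual P LF Z1 -> measurable A ->
      ocdual P LF (fun w => Z1 w * \1_A w))
  (Hpi : forall X, LF X -> LG (pi X))
  (Hcond : forall Q xi, ocdual P LF Q -> PG P G Q -> LF xi ->
      exists2 Y, LF Y & is_condexp P G Q xi Y)
  (HQ : ocdual P LF Z) (HQG : PG P G Z)
  (Hmon : MON P LF pi) (Hreg : REG P G LF pi) :
  forall X, LF X -> {ae P, forall w, K P G LF pi X Z w = Keq P G LF pi X Z w}.
Proof.
move=> X LX; apply: aeW => w; rewrite /K /Keq; congr (_ w).
case: HLF => _ Hadd Hmul _ [_ _ _].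
have [_ _ HZint _] := HQ.
apply: essinf_ext => Y'; split.
- move=> lb f [xi [Lxi [YX [Yxi [c1 c2 e]]]] <-]; apply: lb.
  exists xi => //; split => //; exists YX, Yxi; split => //.
  by move: e; apply: filterS => v ->.
- move=> lb f [xi [Lxi [YX0 [Yxi0 [c1 c2 e]]]] <-].
  have [YX LYX cX] := Hcond Z X HQ HQG LX.
  have [Yx LYx cx] := Hcond Z xi HQ HQG Lxi.
  pose xi' := fun w => xi w + ((-1) * Yx w + YX w).
  have Lxi' : LF xi' by apply: (Hadd) => //; apply: (Hadd) => //; apply: (Hmul).
  have Hle : {ae P, forall w, xi' w <= xi w}.
    have u1 := condexp_uniq HG HQG cX c1.
    have u2 := condexp_uniq HG HQG c2 cx.
    have u12 : {ae P, forall v, YX v <= Yxi0 v}.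
      by move: u1 e; apply: filterS2 => v a b; exact: le_trans a b.
    move: u12 u2; apply: filterS2 => v a b.
    rewrite /xi'; lra.

  have lb' := lb (pi xi') (ex_intro2 _ _ xi' _ erefl).
  have : {ae P, forall w, (Y' w <= (pi xi' w)%:E)%E}.
    apply: lb'; split => //; exists YX, YX; split => //.
      apply: condexp_shift => //; [by case: cX | by case: cX | exact: HZint].
    by apply: aeW.
  move=> H1; move: H1 (Hmon _ _ Lxi' Lxi Hle); apply: filterS2 => v a b.
  by apply: le_trans a _; rewrite lee_fin.
Qed.
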